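(* Let $\mathcal{V}$ be a finite set and let $p_{\theta^{(t)}}, p_{\mathrm{sft}}$ be probability distributions on $\mathcal{V}$ with full support. Let $\alpha\in[0,1)$ and define \[ q^{(t)}_y = \frac{p_{\theta^{(t)}}(y)^{1-\alpha}\,p_{\mathrm{sft}}(y)^{\alpha}}{Z}, \qquad Z=\sum_{y'\in\mathcal{V}} p_{\theta^{(t)}}(y')^{1-\alpha}\,p_{\mathrm{sft}}(y')^{\alpha}. \] Then \[ \mathrm{KL}\big(q^{(t)}\,\|\,p_{\theta^{(t)}}\big) \le \frac{\alpha}{1-\alpha}\,\mathrm{KL}\big(p_{\theta^{(t)}}\,\|\,p_{\mathrm{sft}}\big). \]
   Context: $\mathrm{KL}(u\|v)=\sum_{i} u_i\log(u_i/v_i)$ is the Kullback--Leibler divergence. $q^{(t)}$ is the anchor obtained by linear interpolation of logits followed by softmax (a renormalized geometric mean of the two distributions). In the paper these are conditional output distributions for a fixed input $x$, with full support since they are softmax outputs. *)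

(* Defs.v *)
From HB Require Import structures.
From mathcomp Require Import all_boot all_order all_algebra.
From mathcomp Require Import all_classical all_reals all_analysis.
Set Implicit Arguments. Unset Strict Implicit. Unset Printing Implicit Defensive.
Import Order.TTheory GRing.Theory Num.Theory.
Local Open Scope ring_scope.

Definition full_support_dist (R : realType) (V : finType) (p : V -> R) : Prop :=
  (forall y, 0 < p y) /\ \sum_(y : V) p y = 1.

Definition KL (R : realType) (V : finType) (u v : V -> R) : R :=
  \sum_(i : V) u i * ln (u i / v i).

Definition anchorZ (R : realType) (V : finType) (a : R) (p s : V -> R) : R :=
  \sum_(y : V) p y `^ (1 - a) * s y `^ a.

Definition anchor (R : realType) (V : finType) (a : R) (p s : V -> R) : V -> R :=
  fun y => p y `^ (1 - a) * s y `^ a / anchorZ a p s.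

(* Main.v *)
Require Import Defs.
From HB Require Import structures.
From mathcomp Require Import all_boot all_order all_algebra.
From mathcomp Require Import all_classical all_reals all_analysis.
From mathcomp Require Import ring lra.
Import Order.TTheory GRing.Theory Num.Theory.
Local Open Scope ring_scope.

Lemma ln_le_sub1 (R : realType) (x : R) : 0 < x -> ln x <= x - 1.
Proof.
move=> x0; have := @le_ln1Dx R (x - 1).
have -> : 1 + (x - 1) = x by ring.
apply; lra.
Qed.

Lemma ln_divE (R : realType) (x y : R) : 0 < x -> 0 < y -> ln (x / y) = ln x - ln y.
Proof. by move=> x0 y0; rewrite ln_div ?posrE. Qed.

Lemma gibbs (R : realType) (V : finType) (u v : V -> R) :
  (forall y, 0 < u y) -> (forall y, 0 < v y) -> \sum_y u y = \sum_y v y ->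
  0 <= \sum_y u y * ln (u y / v y).
Proof.
move=> u0 v0 suv.
have e0 : \sum_y (u y - v y) = 0 by rewrite sumrB suv subrr.
rewrite -[X in X <= _]e0; apply: ler_sum => y _.
have h := @ln_le_sub1 R _ (divr_gt0 (v0 y) (u0 y)).
have e : ln (u y / v y) = - ln (v y / u y).
  by rewrite !ln_divE //; ring.
rewrite e.
have uy := u0 y.
have : u y * ln (v y / u y) <= u y * (v y / u y - 1) by rewrite ler_pM2l.
rewrite mulrBr mulrCA divff ?gt_eqF // mulr1 mulr1; lra.
Qed.

Theorem lemma5p3 (R : realType) (V : finType) (ptheta psft : V -> R) (alpha : R) :
  full_support_dist ptheta -> full_support_dist psft ->
  0 <= alpha -> alpha < 1 ->
  KL (anchor alpha ptheta psft) ptheta <= alpha / (1 - alpha) * KL ptheta psft.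
Proof.
move=> [p0 p1] [s0 s1] a0 a1.
set p := ptheta; set s := psft; set a := alpha.
set w := fun y => p y `^ (1 - a) * s y `^ a.
have w0 : forall y, 0 < w y by move=> y; rewrite mulr_gt0 // powR_gt0.
set Z := anchorZ a p s.
have [y0 _] : exists y1 : V, true.
  case: (pickP (fun _ : V => true)) => [y _|h]; first by exists y.
  by move: p1; rewrite big_pred0 // => /esym/eqP; rewrite oner_eq0.
have Z0 : 0 < Z.
  rewrite /Z /anchorZ (bigD1 y0) //=.
  have := w0 y0; have : 0 <= \sum_(i | i != y0) w i by apply: sumr_ge0 => i _; exact: ltW.
  rewrite /w; lra.
set q := anchor a p s.
have qE : forall y, q y = w y / Z by [].
have q0 : forall y, 0 < q y by move=> y; rewrite qE divr_gt0.
have sq1 : \sum_y q y = 1.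
  under eq_bigr => y _ do rewrite qE.
  by rewrite -mulr_suml divff ?gt_eqF.
set c := ln Z.
have hq : forall y, ln (q y) = (1 - a) * ln (p y) + a * ln (s y) - c.
  by move=> y; rewrite qE ln_divE // /w lnM ?posrE ?powR_gt0 // !ln_powR.
set A := \sum_y q y * (ln (s y) - ln (p y)).
have K1 : KL q p = a * A - c.
  rewrite /KL; transitivity (\sum_y (a * (q y * (ln (s y) - ln (p y))) - c * q y)).
    apply: eq_bigr => i _; rewrite ln_divE //. rewrite (hq i); ring.
  by rewrite sumrB -!mulr_sumr sq1 mulr1.
have K2 : KL q s = - (1 - a) * A - c.
  rewrite /KL; transitivity (\sum_y (- (1 - a) * (q y * (ln (s y) - ln (p y))) - c * q y)).
    apply: eq_bigr => i _; rewrite ln_divE // (hq i); ring.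
  by rewrite sumrB -!mulr_sumr sq1 mulr1.
have K3 : KL p q = a * KL p s + c.
  rewrite /KL; transitivity (\sum_y (a * (p y * ln (p y / s y)) + c * p y)).
    apply: eq_bigr => i _; rewrite (@ln_divE R _ _ (p0 i) (q0 i)) (@ln_divE R _ _ (p0 i) (s0 i)) (hq i); ring.
  by rewrite big_split -!mulr_sumr p1 mulr1.
have G1 : 0 <= KL q s by apply: gibbs => //; rewrite sq1 s1.
have G2 : 0 <= KL p q by apply: gibbs => //; rewrite sq1 p1.
rewrite K1; rewrite K2 in G1; rewrite K3 in G2.
have a1' : 0 < 1 - a by rewrite subr_gt0.
rewrite mulrAC ler_pdivlMr //.
move: a0 G1 G2 a1'; rewrite -/a => a0' G1' G2' a1''.
have := mulr_ge0 a0' G1'. nra.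
Qed.
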